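(* Let $d_1,\dots,d_n\ge1$, $\Delta=\Delta^{d_1}\times\cdots\times\Delta^{d_n}$, $N=\sum_i d_i$, and $f:\operatorname{vert}(\Delta)\to\mathbb{R}$. For $\boldsymbol{j}\in\mathcal{G}=\prod_i\{0,\dots,d_i\}$ let $\alpha(\boldsymbol{j})=f(\boldsymbol{v}_{1j_1},\dots,\boldsymbol{v}_{nj_n})$, and for $\pi\in\Pi$ with point representation $\boldsymbol{j}^0,\dots,\boldsymbol{j}^N$ let $f^\pi(\boldsymbol{z})=\alpha(\boldsymbol{j}^0)+\sum_{t\in[N]}(\alpha(\boldsymbol{j}^t)-\alpha(\boldsymbol{j}^{t-1}))z_{\pi_t}$. If $f$ is supermodular, then $$\operatorname{conv}\{(\boldsymbol{z},\mu)\in\operatorname{vert}(\Delta)\times\mathbb{R}:\mu\le f(\boldsymbol{z})\}=\{(\boldsymbol{z},\mu)\in\Delta\times\mathbb{R}:\mu\le f^\pi(\boldsymbol{z})\ \forall\pi\in\Pi\}.$$ If $f$ is submodular, then $\operatorname{conv}\{(\boldsymbol{z},\mu)\in\operatorname{vert}(\Delta)\times\mathbb{R}:\mu\ge f(\boldsymbol{z})\}=\{(\boldsymbol{z},\mu)\in\Delta\times\mathbb{R}:\mu\ge f^\pi(\boldsymbol{z})\ \forall\pi\in\Pi\}$.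
   Context: $\Delta^d=\{\boldsymbol{z}\in\mathbb{R}^d:1\ge z_1\ge\cdots\ge z_d\ge0\}$; variables $\boldsymbol{z}=(\boldsymbol{z}_1,\dots,\boldsymbol{z}_n)$, $\boldsymbol{z}_i=(z_{i1},\dots,z_{id_i})$. Vertices of $\Delta^{d_i}$: $\boldsymbol{v}_{i0}=\boldsymbol{0}$, $\boldsymbol{v}_{ij}$ = vector with first $j$ coordinates $1$ and the rest $0$; $\operatorname{vert}(\Delta)=\prod_i\{\boldsymbol{v}_{i0},\dots,\boldsymbol{v}_{id_i}\}$. Super/submodularity of $f$ is with respect to componentwise max/min on $\operatorname{vert}(\Delta)$ ($f(\boldsymbol{u}\vee\boldsymbol{w})+f(\boldsymbol{u}\wedge\boldsymbol{w})\ge f(\boldsymbol{u})+f(\boldsymbol{w})$ for supermodular, $\le$ for submodular). Staircase: $\pi=(\pi_1,\dots,\pi_N)$, $\pi_t=(\pi_t(1),\pi_t(2))$, $\pi_t(1)\in[n]$ occurring exactly $d_i$ times for each $i$, $\pi_t(2)=|\{s\le t:\pi_s(1)=\pi_t(1)\}|$; $\Pi$ the set of staircases; $z_{\pi_t}=z_{\pi_t(1),\pi_t(2)}$; point representation $\boldsymbol{j}^0=\boldsymbol{0}$, $\boldsymbol{j}^t=\boldsymbol{j}^{t-1}+\boldsymbol{e}_{\pi_t(1)}$. *)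

(* Defs.v *)
From mathcomp Require Import all_boot all_order all_algebra.
From mathcomp Require Import reals.
Set Implicit Arguments. Unset Strict Implicit. Unset Printing Implicit Defensive.
Import Order.TTheory GRing.Theory Num.Theory.
Local Open Scope ring_scope.

(* Coordinates of Delta = Delta^{d_1} x ... x Delta^{d_n}:
   coordinate (i, k) with k : 'I_(d i) is z_{i,k+1} (0-indexed k). *)
Definition dcoord (n : nat) (d : 'I_n -> nat) := {i : 'I_n & 'I_(d i)}.

Definition mkc n (d : 'I_n -> nat) (i : 'I_n) (k : 'I_(d i)) : dcoord d :=
  Tagged (fun i => 'I_(d i)) k.

(* zc z i k = z_{i,k+1} when k < d i (0 otherwise, never used). *)
Definition zc (R : numDomainType) n (d : 'I_n -> nat) (z : dcoord d -> R)
  (i : 'I_n) (k : nat) : R :=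
  match @insub _ (fun k => k < d i)%N 'I_(d i) k with
  | Some k' => z (mkc k') | None => 0 end.

Definition inDelta (R : numDomainType) n (d : 'I_n -> nat) (z : dcoord d -> R) :=
  (forall c, 0 <= z c <= 1) /\
  (forall i (k k' : 'I_(d i)), (k <= k')%N -> z (mkc k') <= z (mkc k)).

Definition grid n (d : 'I_n -> nat) (j : 'I_n -> nat) := forall i, (j i <= d i)%N.

(* vertex (v_{1 j_1}, ..., v_{n j_n}): first j_i coordinates of block i equal 1 *)
Definition vtx (R : numDomainType) n (d : 'I_n -> nat) (j : 'I_n -> nat) :
  dcoord d -> R := fun c => if (val (tagged c) < j (tag c))%N then 1 else 0.

Definition isVert (R : numDomainType) n (d : 'I_n -> nat) (z : dcoord d -> R) :=
  exists j, grid d j /\ z = @vtx R n d j.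

Definition vmax (R : numDomainType) n (d : 'I_n -> nat) (u w : dcoord d -> R) :
  dcoord d -> R := fun c => Num.max (u c) (w c).
Definition vmin (R : numDomainType) n (d : 'I_n -> nat) (u w : dcoord d -> R) :
  dcoord d -> R := fun c => Num.min (u c) (w c).

Definition supermodular (R : numDomainType) n (d : 'I_n -> nat)
  (f : (dcoord d -> R) -> R) :=
  forall u w, isVert u -> isVert w -> f u + f w <= f (vmax u w) + f (vmin u w).
Definition submodular (R : numDomainType) n (d : 'I_n -> nat)
  (f : (dcoord d -> R) -> R) :=
  forall u w, isVert u -> isVert w -> f (vmax u w) + f (vmin u w) <= f u + f w.

(* staircase: a sequence pi(1) of elements of [n], each i occurring d_i times *)
Definition staircase n (d : 'I_n -> nat) (s : seq 'I_n) :=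
  forall i, count_mem i s = d i.

Definition jpt n (s : seq 'I_n) (t : nat) : 'I_n -> nat :=
  fun i => count_mem i (take t s).

Definition alpha (R : numDomainType) n (d : 'I_n -> nat)
  (f : (dcoord d -> R) -> R) (j : 'I_n -> nat) : R := f (@vtx R n d j).

(* f^pi(z) = alpha(j^0) + sum_{t=1}^N (alpha(j^t) - alpha(j^{t-1})) z_{pi_t};
   here t is 0-indexed: the term t corresponds to pi_{t+1}, whose second
   component (1-indexed) is count of pi_{t+1}(1) in the first t+1 entries,
   i.e. 0-indexed coordinate = count in the first t entries. *)
Definition fpi (R : numDomainType) n (d : 'I_n -> nat)
  (f : (dcoord d -> R) -> R) (s : seq 'I_n) (z : dcoord d -> R) : R :=
  alpha f (jpt s 0) +
  \sum_(t < size s)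
     (alpha f (jpt s t.+1) - alpha f (jpt s t)) *
     zc z (tnth (in_tuple s) t) (count_mem (tnth (in_tuple s) t) (take t s)).

Definition conv (R : numDomainType) (C : Type) (S : (C -> R) * R -> Prop)
  (x : (C -> R) * R) : Prop :=
  exists (m : nat) (lam : 'I_m -> R) (p : 'I_m -> (C -> R) * R),
    (forall k, 0 <= lam k) /\ \sum_(k < m) lam k = 1 /\
    (forall k, S (p k)) /\
    (forall c, x.1 c = \sum_(k < m) lam k * (p k).1 c) /\
    x.2 = \sum_(k < m) lam k * (p k).2.

(* Main.v *)
Require Import Defs.
From mathcomp Require Import all_boot all_order all_algebra.
From mathcomp Require Import reals boolp.
From mathcomp Require Import zify ring lra.
Set Implicit Arguments. Unset Strict Implicit. Unset Printing Implicit Defensive.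
Import Order.TTheory GRing.Theory Num.Theory.
Local Open Scope ring_scope.

Lemma zcE (R : numDomainType) n (d : 'I_n -> nat) (z : dcoord d -> R) i (k : 'I_(d i)) :
  zc z i k = z (mkc k).
Proof. by rewrite /zc valK. Qed.

Lemma zc_ext (R : numDomainType) n (d : 'I_n -> nat) (z z' : dcoord d -> R) i k :
  (forall c, z c = z' c) -> zc z i k = zc z' i k.
Proof. by move=> H; rewrite /zc; case: insub => // ?. Qed.

Lemma zc_lin (R : numDomainType) n (d : 'I_n -> nat) m (lam : 'I_m -> R)
   (p : 'I_m -> dcoord d -> R) i k :
  zc (fun c => \sum_(l < m) lam l * p l c) i k = \sum_(l < m) lam l * zc (p l) i k.
Proof.
rewrite /zc; case: insub => [?|] //.
by rewrite big1 // => l _; rewrite mulr0.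
Qed.

Lemma vtx_ext (R : numDomainType) n (d : 'I_n -> nat) (A B : 'I_n -> nat) :
  (forall i, A i = B i) -> @vtx R n d A = @vtx R n d B.
Proof. by move=> H; apply: funext => c; rewrite /vtx H. Qed.

Lemma zc_vtx (R : numDomainType) n (d : 'I_n -> nat) (j : 'I_n -> nat) i k :
  (j i <= d i)%N -> zc (@vtx R n d j) i k = if (k < j i)%N then 1 else 0.
Proof.
move=> hj; rewrite /zc; case: insubP => [k' hk <-|].
  by rewrite /vtx /=.
rewrite -leqNgt => hk; have -> : (k < j i)%N = false by apply/negbTE; rewrite -leqNgt (leq_trans hj hk).
done.
Qed.

Lemma vmax_vtx (R : numDomainType) n (d : 'I_n -> nat) (u w : 'I_n -> nat) :
  vmax (@vtx R n d u) (@vtx R n d w) = @vtx R n d (fun i => maxn (u i) (w i)).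
Proof.
apply: funext => c; rewrite /vmax /vtx; case: c => i k /=.
rewrite leq_max; case: (ltnP k (u i)); case: (ltnP k (w i)) => //= _ _.
- by rewrite maxxx.
- by rewrite (max_l ler01).
- by rewrite (max_r ler01).
- by rewrite maxxx.
Qed.

Lemma vmin_vtx (R : numDomainType) n (d : 'I_n -> nat) (u w : 'I_n -> nat) :
  vmin (@vtx R n d u) (@vtx R n d w) = @vtx R n d (fun i => minn (u i) (w i)).
Proof.
apply: funext => c; rewrite /vmin /vtx; case: c => i k /=.
rewrite leq_min; case: (ltnP k (u i)); case: (ltnP k (w i)) => //= _ _.
- by rewrite minxx.
- by rewrite (min_r ler01).
- by rewrite (min_l ler01).
- by rewrite minxx.
Qed.

Lemma abel (R : comPzRingType) (Z a : nat -> R) N :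
  \sum_(t < N.+1) (Z t - Z t.+1) * a t =
  Z 0%N * a 0%N + \sum_(t < N) (a t.+1 - a t) * Z t.+1 - Z N.+1 * a N.
Proof.
elim: N => [|N IH].
  by rewrite big_ord_recr !big_ord0 /=; ring.
by rewrite big_ord_recr IH big_ord_recr /=; ring.
Qed.

Definition Yv (R : numDomainType) n (d : 'I_n -> nat) (z : dcoord d -> R)
  (s : seq 'I_n) (t : nat) : R :=
  if (insub t : option 'I_(size s)) is Some t' then
    zc z (tnth (in_tuple s) t') (count_mem (tnth (in_tuple s) t') (take t' s))
  else 0.

Definition Zv (R : numDomainType) n (d : 'I_n -> nat) (z : dcoord d -> R)
  (s : seq 'I_n) (t : nat) : R := if t is t'.+1 then Yv z s t' else 1.

Definition Wv (R : numDomainType) n (d : 'I_n -> nat) (z : dcoord d -> R)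
  (s : seq 'I_n) (t : nat) : R := Zv z s t - Zv z s t.+1.

Lemma YvE (R : numDomainType) n (d : 'I_n -> nat) (z : dcoord d -> R) s x0 t :
  (t < size s)%N ->
  Yv z s t = zc z (nth x0 s t) (count_mem (nth x0 s t) (take t s)).
Proof. by move=> h; rewrite /Yv insubT /= (tnth_nth x0). Qed.

Lemma Yv_ge (R : numDomainType) n (d : 'I_n -> nat) (z : dcoord d -> R) s t :
  (size s <= t)%N -> Yv z s t = 0.
Proof. by move=> h; rewrite /Yv insubF // ltnNge h. Qed.

Lemma fpiE (R : numDomainType) n (d : 'I_n -> nat) (f : (dcoord d -> R) -> R) s z :
  fpi f s z = alpha f (jpt s 0) +
    \sum_(t < size s) (alpha f (jpt s t.+1) - alpha f (jpt s t)) * Yv z s t.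
Proof. by rewrite /fpi; congr (_ + _); apply: eq_bigr => t _; rewrite /Yv valK. Qed.

Lemma fpiW (R : numDomainType) n (d : 'I_n -> nat) (f : (dcoord d -> R) -> R) s z :
  fpi f s z = \sum_(t < (size s).+1) Wv z s t * alpha f (jpt s t).
Proof.
rewrite /Wv (abel (Zv z s) (fun t => alpha f (jpt s t))) /= (Yv_ge z (leqnn _)) mul1r mul0r subr0 fpiE.
by [].
Qed.

Lemma sumW (R : numDomainType) n (d : 'I_n -> nat) (z : dcoord d -> R) s :
  \sum_(t < (size s).+1) Wv z s t = 1.
Proof.
transitivity (\sum_(t < (size s).+1) (Zv z s t - Zv z s t.+1) * (fun _ => 1 : R) t).
  by apply: eq_bigr => t _; rewrite mulr1.
rewrite (abel (Zv z s) (fun _ => 1)) /= (Yv_ge z (leqnn _)) big1 ?mul1r ?mul0r ?subr0 ?addr0 // => t _.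
by rewrite subrr mul0r.
Qed.

Lemma count_take_le (T : eqType) (x : T) s t :
  (count_mem x (take t s) <= count_mem x s)%N.
Proof.
by rewrite -{2}(cat_take_drop t s) count_cat; apply: leq_addr. Qed.

Lemma jptS n (s : seq 'I_n) (t : 'I_(size s)) i :
  jpt s t.+1 i = (jpt s t i + (tnth (in_tuple s) t == i))%N.
Proof.
rewrite /jpt (take_nth (tnth (in_tuple s) t) (ltn_ord t)) -cats1 count_cat /=.
by rewrite -(tnth_nth (tnth (in_tuple s) t) (in_tuple s) t) addn0.
Qed.

Lemma vertex_id (R : numDomainType) n (d : 'I_n -> nat) (z : dcoord d -> R) s :
  staircase d s -> forall c,
  z c = \sum_(t < (size s).+1) Wv z s t * @vtx R n d (jpt s t) c.
Proof.
move=> hs [i k]; rewrite /Wv (abel (Zv z s) (fun t => @vtx R n d (jpt s t) (Tagged (fun i => 'I_(d i)) k))) /= (Yv_ge z (leqnn _)) mul0r subr0.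
have -> : @vtx R n d (jpt s 0) (Tagged (fun i => 'I_(d i)) k) = 0.
  by rewrite /vtx /jpt take0.
rewrite mulr0 add0r.
set g := fun t => @vtx R n d (jpt s t) (Tagged (fun i => 'I_(d i)) k).
transitivity (\sum_(t < size s) (g t.+1 - g t) * z (Tagged (fun i => 'I_(d i)) k)).
  rewrite -mulr_suml -(big_mkord (fun _ => true) (fun t => g t.+1 - g t)) telescope_sumr //.
  rewrite /g /vtx /= /jpt take0 take_size hs ltn_ord /=; by rewrite subr0 mul1r.
apply: eq_bigr => t _.
rewrite (YvE z (tnth (in_tuple s) t) (ltn_ord t)) -(tnth_nth _ (in_tuple s)).
rewrite /g /vtx /= jptS.
case: eqP => [e|_]; last by rewrite addn0 subrr !mul0r.
rewrite e addn1; case: (ltngtP k (jpt s t i)) => h.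
- by rewrite ltnS (ltnW h) subrr !mul0r.
- by rewrite ltnS leqNgt h subrr !mul0r.
- rewrite ltnS -h leqnn subr0 !mul1r.
  by rewrite -/(jpt s t i) -h zcE.
Qed.

Lemma fpi_ext (R : numDomainType) n (d : 'I_n -> nat) (f : (dcoord d -> R) -> R) s z z' :
  (forall c, z c = z' c) -> fpi f s z = fpi f s z'.
Proof.
move=> H; rewrite /fpi; congr (_ + _); apply: eq_bigr => t _.
by rewrite (zc_ext _ _ H).
Qed.

Lemma fpi_lin (R : numDomainType) n (d : 'I_n -> nat) (f : (dcoord d -> R) -> R) s
  m (lam : 'I_m -> R) (p : 'I_m -> dcoord d -> R) :
  \sum_(l < m) lam l = 1 ->
  fpi f s (fun c => \sum_(l < m) lam l * p l c) = \sum_(l < m) lam l * fpi f s (p l).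
Proof.
move=> hl; rewrite /fpi.
under eq_bigr => t _ do rewrite zc_lin mulr_sumr.
under [in RHS]eq_bigr => l _ do rewrite mulrDr mulr_sumr.
rewrite big_split /= -mulr_suml hl mul1r exchange_big /=.
congr (_ + _); apply: eq_bigr => l _; apply: eq_bigr => t _; by rewrite mulrCA.
Qed.

Lemma jpt_grid n (d : 'I_n -> nat) s t : staircase d s -> grid d (jpt s t).
Proof. by move=> hs i; rewrite -(hs i); apply: count_take_le. Qed.

Lemma key_super (R : realDomainType) n (d : 'I_n -> nat) (f : (dcoord d -> R) -> R) s j :
  supermodular f -> grid d j -> staircase d s ->
  f (@vtx R n d j) <= fpi f s (@vtx R n d j).
Proof.
move=> hf hj hs.
have step : forall T, (T <= size s)%N ->
  f (@vtx R n d (fun i => minn (jpt s T i) (j i))) <= alpha f (jpt s 0) +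
   \sum_(t < T) (alpha f (jpt s t.+1) - alpha f (jpt s t)) * Yv (@vtx R n d j) s t.
  elim=> [|T IH] hT.
    rewrite big_ord0 addr0 /alpha (@vtx_ext R n d _ (jpt s 0)) // => i.
    by rewrite /jpt take0 /= min0n.
  have hT' : (T < size s)%N by [].
  have IH' := IH (ltnW hT').
  rewrite big_ord_recr /=.
  set t := Ordinal hT'.
  have E : forall i, jpt s T.+1 i = (jpt s T i + (tnth (in_tuple s) t == i))%N.
    by move=> i; apply: (jptS t).
  rewrite (YvE _ (tnth (in_tuple s) t) hT') -(tnth_nth _ (in_tuple s) t).
  rewrite zc_vtx; last exact: hj.
  set x := tnth (in_tuple s) t.
  rewrite -/(jpt s T x).
  case: (ltnP (jpt s T x) (j x)) => hx.
    have sm := hf (@vtx R n d (fun i => minn (jpt s T.+1 i) (j i))) (@vtx R n d (jpt s T)).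
    rewrite vmax_vtx vmin_vtx in sm.
    rewrite (@vtx_ext R n d (fun i => maxn (minn (jpt s T.+1 i) (j i)) (jpt s T i)) (jpt s T.+1)) in sm; last first.
      by move=> i; rewrite E -/x; case: eqP => [<-|_] /=; lia.
    rewrite (@vtx_ext R n d (fun i => minn (minn (jpt s T.+1 i) (j i)) (jpt s T i)) (fun i => minn (jpt s T i) (j i))) in sm; last first.
      by move=> i; rewrite E -/x; case: eqP => [<-|_] /=; lia.
    have := sm _ _; rewrite /alpha in IH' * => /(_ _ _).
    move=> H.
    have H' := H (ex_intro _ _ (conj (fun i => leq_trans (geq_minr _ _) (hj i)) erefl))
                 (ex_intro _ _ (conj (jpt_grid T hs) erefl)).
    rewrite mulr1; lra.
  rewrite mulr0 addr0 (@vtx_ext R n d _ (fun i => minn (jpt s T i) (j i))) //.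
  by move=> i; rewrite E -/x; case: eqP => [<-|_] /=; lia.
have := step (size s) (leqnn _).
rewrite (@vtx_ext R n d _ j); first by rewrite fpiE.
by move=> i; rewrite /jpt take_size hs; apply/minn_idPr/hj.
Qed.

Lemma sum_count n (s : seq 'I_n) : (\sum_(i < n) count_mem i s)%N = size s.
Proof.
elim: s => [|x s IH] /=; first by rewrite big1.
rewrite big_split /= IH (bigD1 x) //= eqxx big1 // => i /negbTE.
by rewrite eq_sym => ->.
Qed.

Lemma zc_mono (R : numDomainType) n (d : 'I_n -> nat) (z : dcoord d -> R) i k k' :
  inDelta z -> (k <= k')%N -> (k' < d i)%N -> zc z i k' <= zc z i k.
Proof.
move=> [_ hz] hk hk'.
have hk2 : (k < d i)%N by apply: leq_ltn_trans hk hk'.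
rewrite /zc (insubT (fun k => (k < d i)%N) hk') (insubT (fun k => (k < d i)%N) hk2) /=.
exact: (hz i (Ordinal hk2) (Ordinal hk')).
Qed.

Lemma Yv01 (R : numDomainType) n (d : 'I_n -> nat) (z : dcoord d -> R) s t :
  inDelta z -> 0 <= Yv z s t <= 1.
Proof.
move=> [hz _]; rewrite /Yv; case: insub => [t'|]; last by rewrite lexx ler01.
rewrite /zc; case: insub => [k|]; last by rewrite lexx ler01.
exact: hz.
Qed.

Lemma Yv_rcons (R : numDomainType) n (d : 'I_n -> nat) (z : dcoord d -> R) s x t :
  (t < size s)%N -> Yv z (rcons s x) t = Yv z s t.
Proof.
move=> h.
rewrite (YvE z x h) (YvE z x); last by rewrite size_rcons ltnS ltnW.
by rewrite nth_rcons h -cats1 takel_cat // ltnW.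
Qed.

Lemma Yv_last (R : numDomainType) n (d : 'I_n -> nat) (z : dcoord d -> R) s x :
  Yv z (rcons s x) (size s) = zc z x (count_mem x s).
Proof.
rewrite (YvE z x); last by rewrite size_rcons.
by rewrite nth_rcons ltnn eqxx -cats1 takel_cat // take_size.
Qed.

Lemma greedy (R : realDomainType) n (d : 'I_n -> nat) (z : dcoord d -> R) :
  inDelta z -> exists s, staircase d s /\ forall t, 0 <= Wv z s t.
Proof.
move=> hz.
have G : forall T, (T <= \sum_(i < n) d i)%N -> exists s : seq 'I_n,
  [/\ size s = T, forall i, (count_mem i s <= d i)%N,
      forall t, (t.+1 < T)%N -> Yv z s t.+1 <= Yv z s t &
      (0 < T)%N -> forall i, (count_mem i s < d i)%N ->
          zc z i (count_mem i s) <= Yv z s T.-1].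
  elim=> [|T IH] hT.
    by exists [::]; split => // i; rewrite /=.
  have [s [hsz hc hm hl]] := IH (ltnW hT).
  have [i0 hi0] : exists i, (count_mem i s < d i)%N.
    case: (pickP (fun i => count_mem i s < d i)%N) => [i hi|h]; first by exists i.
    exfalso.
    have : (\sum_(i < n) d i = T)%N.
      rewrite -hsz -sum_count; apply: eq_bigr => i _.
      by apply/eqP; rewrite eqn_leq hc leqNgt h.
    by move=> e; rewrite e ltnn in hT.
  pose P := [pred i | (count_mem i s < d i)%N].
  have hP0 : P i0 by [].
  case: (arg_maxP (fun i => zc z i (count_mem i s)) hP0) => i hPi hmax.
  have hci : forall i', count_mem i' (rcons s i) = (count_mem i' s + (i == i'))%N.
    by move=> i'; rewrite -cats1 count_cat /= addn0.
  exists (rcons s i); split.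
  - by rewrite size_rcons hsz.
  - move=> i'; rewrite hci; case: eqP => [<-|_] /=; last by rewrite addn0.
    by rewrite addn1.
  - move=> t ht.
    have hts : (t < size s)%N by rewrite hsz -ltnS.
    rewrite (Yv_rcons z i hts).
    case: (ltnP t.+1 T) => h2.
      by rewrite Yv_rcons ?hsz //; apply: hm.
    have eT : T = t.+1 by apply/eqP; rewrite eqn_leq h2 -ltnS ht.
    rewrite -{1}eT -hsz Yv_last.
    have hT0 : (0 < T)%N by rewrite eT.
    by have := hl hT0 i hPi; rewrite eT.
  - move=> _ i'; rewrite hci /= -hsz Yv_last.
    case: eqP => [<-|ne] /=.
      rewrite addn1 => hlt; apply: zc_mono => //.
    rewrite addn0 => hlt; exact: hmax.
have [s [hsz hc hm hl]] := G _ (leqnn _).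
have hs : staircase d s.
  move=> i; apply/eqP; rewrite eqn_leq hc /= leqNgt; apply/negP => hlt.
  have : (\sum_(i < n) count_mem i s < \sum_(i < n) d i)%N.
    rewrite (bigD1 i) //= [X in (_ < X)%N](bigD1 i) //=.
    rewrite -addSn; apply: leq_add => //; apply: leq_sum => j _; exact: hc.
  by rewrite sum_count hsz ltnn.
exists s; split => // t; rewrite /Wv subr_ge0.
case: t => [|t] /=.
  by case/andP: (Yv01 s 0 hz).
case: (ltnP t.+1 (size s)) => h.
  by apply: hm; rewrite hsz in h.
by rewrite (Yv_ge z h); case/andP: (Yv01 s t hz).
Qed.

Lemma conv_mono (R : numDomainType) (C : Type) (S S' : (C -> R) * R -> Prop) x :
  (forall p, S p -> S' p) -> conv S x -> conv S' x.
Proof.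
move=> H [m [lam [p [h0 [h1 [hS [h2 h3]]]]]]].
by exists m, lam, p; split => //; split => //; split => // k; apply: H.
Qed.

Lemma conv_rev (R : realDomainType) n (d : 'I_n -> nat) (f : (dcoord d -> R) -> R)
  s (z : dcoord d -> R) mu :
  staircase d s -> (forall t, 0 <= Wv z s t) ->
  conv (fun p => isVert p.1 /\ p.2 = f p.1 + (mu - fpi f s z)) (z, mu).
Proof.
move=> hs hW.
exists (size s).+1, (fun t : 'I_(size s).+1 => Wv z s t),
  (fun t : 'I_(size s).+1 => (@vtx R n d (jpt s t), alpha f (jpt s t) + (mu - fpi f s z))).
split => //; split; first exact: sumW.
split; first by move=> k /=; split => //; exists (jpt s k); split => //; apply: jpt_grid.
split; first by move=> c /=; apply: vertex_id.
rewrite /=.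
under eq_bigr => t _ do rewrite mulrDr.
rewrite big_split /= -fpiW -mulr_suml sumW mul1r.
by rewrite addrC subrK.
Qed.

Lemma vtx01 (R : numDomainType) n (d : 'I_n -> nat) j c : 0 <= @vtx R n d j c <= 1.
Proof. by rewrite /vtx; case: ifP => _; rewrite ?lexx ?ler01. Qed.

Lemma conv_inDelta (R : realDomainType) n (d : 'I_n -> nat) (Q : (dcoord d -> R) * R -> Prop) z mu :
  conv (fun p => isVert p.1 /\ Q p) (z, mu) -> inDelta z.
Proof.
move=> [m [lam [p [h0 [h1 [hS [h2 h3]]]]]]]; rewrite /= in h2.
split.
  move=> c; rewrite h2; apply/andP; split.
    apply: sumr_ge0 => l _; apply: mulr_ge0 => //.
    by have [[j [_ ->]] _] := hS l; case/andP: (vtx01 R j c).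
  rewrite -h1; apply: ler_sum => l _; rewrite -[X in _ <= X]mulr1; apply: ler_wpM2l => //.
  by have [[j [_ ->]] _] := hS l; case/andP: (vtx01 R j c).
move=> i k k' hk; rewrite !h2; apply: ler_sum => l _; apply: ler_wpM2l => //.
have [[j [_ ->]] _] := hS l; rewrite /vtx /=.
case: ifP => h; first by rewrite (leq_ltn_trans hk h) lexx.
by case: ifP => _; rewrite ?lexx ?ler01.
Qed.

Lemma super_neg (R : realDomainType) n (d : 'I_n -> nat) (f : (dcoord d -> R) -> R) :
  submodular f -> supermodular (fun v => - f v).
Proof. by move=> hf u w hu hw; have := hf u w hu hw; lra. Qed.

Lemma fpi_neg (R : realDomainType) n (d : 'I_n -> nat) (f : (dcoord d -> R) -> R) s z :
  fpi (fun v => - f v) s z = - fpi f s z.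
Proof.
rewrite /fpi /alpha opprD -sumrN; congr (_ + _); apply: eq_bigr => t _; ring.
Qed.

Theorem mainTheorem12 (R : realType) (n : nat) (d : 'I_n -> nat)
  (f : (dcoord d -> R) -> R) :
  (forall i, (1 <= d i)%N) ->
  (supermodular f ->
     forall (z : dcoord d -> R) (mu : R),
       conv (fun p => isVert p.1 /\ p.2 <= f p.1) (z, mu) <->
       (inDelta z /\ forall s, staircase d s -> mu <= fpi f s z)) /\
  (submodular f ->
     forall (z : dcoord d -> R) (mu : R),
       conv (fun p => isVert p.1 /\ f p.1 <= p.2) (z, mu) <->
       (inDelta z /\ forall s, staircase d s -> fpi f s z <= mu)).
Proof.
move=> _; split.
  move=> hf z mu; split.
    move=> hc; split; first exact: conv_inDelta hc.
    move=> s hs; move: hc => [m [lam [p [h0 [h1 [hS [h2 h3]]]]]]]; rewrite /= in h2 h3.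
    rewrite h3 (fpi_ext f s h2) fpi_lin //.
    apply: ler_sum => l _; apply: ler_wpM2l => //.
    have [[j [hj e]] hle] := hS l.
    apply: le_trans hle _; rewrite e; exact: key_super.
  move=> [hz hmu]; have [s [hs hW]] := greedy hz.
  apply: conv_mono (conv_rev f mu hs hW) => p [hv ->]; split => //.
  by have := hmu s hs; lra.
move=> hf z mu; split.
  move=> hc; split; first exact: conv_inDelta hc.
  move=> s hs; move: hc => [m [lam [p [h0 [h1 [hS [h2 h3]]]]]]]; rewrite /= in h2 h3.
  rewrite h3 (fpi_ext f s h2) fpi_lin //.
  apply: ler_sum => l _; apply: ler_wpM2l => //.
  have [[j [hj e]] hle] := hS l.
  apply: le_trans hle; rewrite e.
  have := key_super (super_neg hf) hj hs; rewrite fpi_neg; lra.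
move=> [hz hmu]; have [s [hs hW]] := greedy hz.
apply: conv_mono (conv_rev f mu hs hW) => p [hv ->]; split => //.
by have := hmu s hs; lra.
Qed.
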